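(* For positive integers $p,q,r,s$, the transition maps satisfy: (1) $T^{p,q}_{r,s}:\Lambda^{p,q}\to\Lambda^{r,s}$ is well-defined; (2) $T^{p,q}_{r,s}$ is order-preserving; (3) $T^{r,s}_{p,q}\circ T^{p,q}_{r,s}\le\mathrm{id}_{\Lambda^{p,q}}$ (pointwise); (4) $T^{r,s}_{p,q}\circ T^{p,q}_{r,s}=\mathrm{id}_{\Lambda^{p,q}}$ if $p\le r$ and $q\le s$; (5) $(T^{p,q}_{r,s})^{-1}(0)=\{0\}$ if $p,q,r,s\ge 2$.
   Context: $\mathbb{N}=\{0,1,2,\dots\}$. For positive integers $p,q$, $\Lambda^{p,q}=\langle a,b\mid pa=qb\rangle$ is the quotient of the free commutative monoid $\mathbb{N}a\oplus\mathbb{N}b$ by the congruence generated by $\lambda+pa\sim\lambda+qb$; it is ordered by $\lambda\le\mu$ iff $\lambda+\nu=\mu$ for some $\nu\in\Lambda^{p,q}$. The transition function $\tau^p_q:\mathbb{N}\to\mathbb{N}$ is $\tau^p_q(mp+n)=mq+\min\{n,q-1\}$ ($m\in\mathbb{N}$, $0\le n<p$). The transition map $T^{p,q}_{r,s}:\Lambda^{p,q}\to\Lambda^{r,s}$ is defined by $T^{p,q}_{r,s}(ma+nb)=\tau^p_r(m)a+\tau^q_s(n)b$ for $m,n\in\mathbb{N}$. For maps $f,g$ into a poset, $f\le g$ means $f(x)\le g(x)$ for all $x$. *)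

(* Defs.v *)
From mathcomp Require Import all_boot.
From Stdlib Require Import Relations.
Set Implicit Arguments. Unset Strict Implicit. Unset Printing Implicit Defensive.

(* An element m a + n b of the free commutative monoid N a (+) N b is the pair (m, n). *)
Definition fmon := (nat * nat)%type.
Definition fadd (x y : fmon) : fmon := (x.1 + y.1, x.2 + y.2).

Inductive gen_rel (p q : nat) : fmon -> fmon -> Prop :=
| gen_rel_intro (m n : nat) : gen_rel p q (m + p, n) (m, n + q).

(* The congruence generated by gen_rel: its reflexive-symmetric-transitive
   closure (gen_rel is translation invariant, so this closure is already
   compatible with addition, i.e. it is the generated congruence). *)
Definition lam_eq (p q : nat) : relation fmon := clos_refl_sym_trans fmon (gen_rel p q).

Definition lam_le (p q : nat) (x y : fmon) : Prop :=
  exists v : fmon, lam_eq p q (fadd x v) y.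

Definition tau (p q : nat) (k : nat) : nat := (k %/ p) * q + minn (k %% p) q.-1.

Definition trans_map (p q r s : nat) (x : fmon) : fmon := (tau p r x.1, tau q s x.2).

(* Main.v *)
Require Import Defs.
From mathcomp Require Import all_boot.
From mathcomp Require Import zify.
From Stdlib Require Import Relations.

Lemma tau_form p q d e : e < p -> tau p q (d * p + e) = d * q + minn e q.-1.
Proof.
move=> he; rewrite /tau.
have -> : (d * p + e) %/ p = d.
  by rewrite addnC divnDMl ?(leq_ltn_trans _ he) // divn_small.
by rewrite modnMDl modn_small.
Qed.

Lemma tau_dec p q k : 0 < p -> tau p q k = k %/ p * q + minn (k %% p) q.-1
  /\ k = k %/ p * p + k %% p /\ k %% p < p.
Proof. move=> hp; split=> //; split; [exact: divn_eq | exact: ltn_pmod]. Qed.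

Lemma tau_mono p q k k' : 0 < p -> 0 < q -> k <= k' -> tau p q k <= tau p q k'.
Proof.
move=> hp hq hk.
have [t1 [e1 l1]] := tau_dec p q k hp.
have [t2 [e2 l2]] := tau_dec p q k' hp.
rewrite t1 t2.
set d := k %/ p in t1 e1 l1 *; set e := k %% p in t1 e1 l1 *.
set d' := k' %/ p in t2 e2 l2 *; set e' := k' %% p in t2 e2 l2 *.
have [hd|hd|hd] := ltngtP d d'.
- have : d.+1 * q <= d' * q by rewrite leq_mul2r hd orbT.
  rewrite mulSn. lia.
- exfalso. have : d'.+1 * p <= d * p by rewrite leq_mul2r hd orbT.
  rewrite mulSn. lia.
- rewrite hd in e1 *. lia.
Qed.

Lemma tau_addp p q m : 0 < p -> tau p q (m + p) = tau p q m + q.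
Proof.
move=> hp; rewrite /tau.
have -> : (m + p) %/ p = m %/ p + 1 by have := divnDMl 1 m hp; rewrite mul1n.
by rewrite modnDr mulnDl mul1n; lia.
Qed.

Definition can (p q : nat) (x : fmon) : fmon := (x.1 %% p, x.2 + x.1 %/ p * q).

Lemma can_inv p q x y : 0 < p -> lam_eq p q x y -> can p q x = can p q y.
Proof.
move=> hp; elim.
- move=> a b [m n]; rewrite /can /=; rewrite modnDr.
  have -> : (m + p) %/ p = m %/ p + 1 by have := divnDMl 1 m hp; rewrite mul1n.
  congr pair; rewrite mulnDl mul1n; lia.
- by [].
- by move=> a b _ ->.
- by move=> a b c _ -> _ ->.
Qed.

Lemma to_can p q d e n : lam_eq p q (d * p + e, n) (e, n + d * q).
Proof.
elim: d n => [|d IH] n.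
  rewrite !mul0n add0n addn0; exact: rst_refl.
have -> : d.+1 * p + e = (d * p + e) + p by rewrite mulSn; lia.
have -> : n + d.+1 * q = (n + q) + d * q by rewrite mulSn; lia.
apply: (rst_trans _ _ _ ((d * p + e), n + q)); last exact: (IH (n + q)).
apply: rst_step; exact: gen_rel_intro.
Qed.

Lemma lam_eq_can p q x : 0 < p -> lam_eq p q x (can p q x).
Proof.
move=> hp; case: x => m n; rewrite /can /=.
rewrite {1}(divn_eq m p); exact: to_can.
Qed.

Lemma can_eq p q x y : 0 < p -> can p q x = can p q y -> lam_eq p q x y.
Proof.
move=> hp h; eapply rst_trans; first exact: (lam_eq_can p q x hp).
rewrite h; apply: rst_sym; exact: lam_eq_can.
Qed.

Lemma tau_round p r m : 0 < p -> 0 < r ->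
  tau r p (tau p r m) = m %/ p * p + minn (m %% p) r.-1.
Proof.
move=> hp hr; have [t [e l]] := tau_dec p r m hp; rewrite t tau_form.
  congr addn; lia.
lia.
Qed.

Lemma le_refl_pair p q x y : x.1 <= y.1 -> x.2 <= y.2 -> lam_le p q x y.
Proof.
case: x y => [a b] [c d] /= h1 h2; exists (c - a, d - b).
rewrite /fadd /= !subnKC //; exact: rst_refl.
Qed.

Lemma zero_class p q x : 0 < p -> 0 < q -> lam_eq p q x (0, 0) -> x = (0, 0).
Proof.
move=> hp hq /(@can_inv p q x (0,0) hp); rewrite /can /= mod0n div0n; case: x => m n /= [h1 h2].
have hd : m %/ p = 0.
  have : m %/ p * q == 0 by apply/eqP; lia.
  by rewrite muln_eq0 (gtn_eqF hq) orbF => /eqP.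
have hm : m = m %/ p * p + m %% p := divn_eq m p.
rewrite hd h1 in hm; congr pair; lia.
Qed.

Lemma tau0 p r m : 0 < p -> 1 < r -> tau p r m = 0 -> m = 0.
Proof.
move=> hp hr; have [t [e l]] := tau_dec p r m hp; rewrite t => /eqP.
rewrite addn_eq0 muln_eq0 (gtn_eqF (ltnW hr)) orbF => /andP[/eqP hd /eqP h2].
rewrite hd mul0n add0n in e.
rewrite e; move: h2; have hr1 : 0 < r.-1 by lia. clear t; case: (m %% p) => // k.
move=> h; lia.
Qed.

Lemma wd p q r s x y : 0 < p -> 0 < q -> lam_eq p q x y ->
     lam_eq r s (trans_map p q r s x) (trans_map p q r s y).
Proof.
move=> hp hq; elim.
- move=> a b [m n]; rewrite /trans_map /= tau_addp // tau_addp //.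
  apply: rst_step; exact: gen_rel_intro.
- move=> a; exact: rst_refl.
- move=> a b _ h; exact: rst_sym.
- move=> a b c _ h1 _ h2; exact: rst_trans h1 h2.
Qed.

Theorem proposition2p4 (p q r s : nat) :
  0 < p -> 0 < q -> 0 < r -> 0 < s ->
  (* (1) well-defined on Lambda^{p,q} -> Lambda^{r,s} *)
  (forall x y : fmon, lam_eq p q x y ->
     lam_eq r s (trans_map p q r s x) (trans_map p q r s y)) /\
  (* (2) order-preserving *)
  (forall x y : fmon, lam_le p q x y ->
     lam_le r s (trans_map p q r s x) (trans_map p q r s y)) /\
  (* (3) T^{r,s}_{p,q} o T^{p,q}_{r,s} <= id *)
  (forall x : fmon, lam_le p q (trans_map r s p q (trans_map p q r s x)) x) /\
  (* (4) equality when p <= r and q <= s *)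
  (p <= r -> q <= s ->
     forall x : fmon, lam_eq p q (trans_map r s p q (trans_map p q r s x)) x) /\
  (* (5) preimage of 0 is {0} when p, q, r, s >= 2 *)
  (2 <= p -> 2 <= q -> 2 <= r -> 2 <= s ->
     forall x : fmon, lam_eq r s (trans_map p q r s x) (0, 0) <-> lam_eq p q x (0, 0)).
Proof.
move=> hp hq hr hs.
split; first by move=> x y; exact: wd.
split.
  move=> x y [v h].
  exists (tau p r (x.1 + v.1) - tau p r x.1, tau q s (x.2 + v.2) - tau q s x.2).
  have -> : fadd (trans_map p q r s x) (tau p r (x.1 + v.1) - tau p r x.1, tau q s (x.2 + v.2) - tau q s x.2) = trans_map p q r s (fadd x v).
    rewrite /fadd /trans_map /= !subnKC //; apply: tau_mono => //; exact: leq_addr.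
  exact: wd.
split.
  case=> m n; apply: le_refl_pair; rewrite /trans_map /= tau_round //.
    have e := divn_eq m p; move: e; move: (m %/ p * p) (m %% p) => a b e; lia.
  have e := divn_eq n q; move: e; move: (n %/ q * q) (n %% q) => a b e; lia.
split.
  move=> hpr hqs [m n]; rewrite /trans_map /= !tau_round //.
  have h1 := ltn_pmod m hp; have h2 := ltn_pmod n hq.
  have -> : minn (m %% p) r.-1 = m %% p by lia.
  have -> : minn (n %% q) s.-1 = n %% q by lia.
  rewrite -!divn_eq; exact: rst_refl.
move=> hp2 hq2 hr2 hs2 [m n]; split.
  move=> /(@zero_class r s _ hr hs); rewrite /trans_map /= => -[h1 h2].
  rewrite (@tau0 p r m hp hr2 h1) (@tau0 q s n hq hs2 h2); exact: rst_refl.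
move=> /(@zero_class p q _ hp hq) -[-> ->].
rewrite /trans_map /tau /= !div0n !mod0n !mul0n /= !min0n; exact: rst_refl.
Qed.
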